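(* Let $\mathbb{K}=(G,M,I)$ be a finite formal context. Then the concept lattice of the Birkhoff completion of $\mathbb{K}$ is isomorphic to the Birkhoff completion of the concept lattice of $\mathbb{K}$: $\underline{\mathfrak{B}}(BC(\mathbb{K}))\cong BC(\underline{\mathfrak{B}}(\mathbb{K}))$.
   Context: A formal context $\mathbb{K}=(G,M,I)$ has derivation operators $A'=\{m\in M\mid \forall g\in A:(g,m)\in I\}$ for $A\subseteq G$ and $B'=\{g\in G\mid\forall m\in B:(g,m)\in I\}$ for $B\subseteq M$; formal concepts are pairs $(A,B)$ with $A'=B$, $B'=A$, ordered by inclusion of extents, forming the concept lattice $\underline{\mathfrak{B}}(\mathbb{K})$. The attribute concept of $m$ is $\mu m=(\{m\}',\{m\}'')$. For $m,n\in M$ write $m\ge_{\mathbb{K}} n$ iff $\{m\}'\supseteq\{n\}'$. Let $\mathcal{M}(M)$ be the set of attributes $m\in M$ whose attribute concept $\mu m$ is meet-irreducible in $\underline{\mathfrak{B}}(\mathbb{K})$, and let $\overline{\mathcal{M}(M)}=\{\overline m\mid m\in\mathcal{M}(M)\}$ be a set of new elements (disjoint copies, disjoint from $G$). The Birkhoff completion of $\mathbb{K}$ is the context $BC(\mathbb{K}):=\big(G\cup\overline{\mathcal{M}(M)},\,M,\,I\cup\{(\overline m,n)\in\overline{\mathcal{M}(M)}\times M\mid m\not\ge_{\mathbb{K}} n\}\big)$. For a finite lattice $L$ with set $\mathcal{M}(L)$ of meet-irreducible elements, $BC(L):=(\mathcal{F}(\mathcal{M}(L)),\supseteq)$, the order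 filters of $\mathcal{M}(L)$ ordered by reverse inclusion. *)

(* Defs.v *)
From mathcomp Require Import all_boot.
Set Implicit Arguments. Unset Strict Implicit. Unset Printing Implicit Defensive.

Section Poset.
Variables (T : finType) (le : rel T).

Definition is_meet (x y z : T) : bool :=
  [&& le x y, le x z & [forall w, (le w y && le w z) ==> le w x]].

Definition meet_irr (x : T) : bool :=
  [exists y, ~~ le y x] &&
  [forall y, forall z, is_meet x y z ==> ((x == y) || (x == z))].

(* order isomorphism (= lattice isomorphism between lattices) *)
Definition order_iso (U : finType) (leU : rel U) : Prop :=
  exists f : T -> U, bijective f /\ forall x y, le x y = leU (f x) (f y).

(* BC(L): order filters of the set of meet-irreducibles, reverse inclusion *)
Definition is_mirr_filter (F : {set T}) : bool :=
  (F \subset [set x | meet_irr x]) &&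
  [forall x, forall y,
     [&& x \in F, meet_irr y & le x y] ==> (y \in F)].

Definition BC_lattice := {F : {set T} | is_mirr_filter F}.
Definition BC_le : rel BC_lattice := fun F1 F2 => val F2 \subset val F1.
End Poset.

Section FCA.
Variables (G M : finType) (I : G -> M -> bool).

Definition intent (A : {set G}) : {set M} := [set m | [forall g in A, I g m]].
Definition extent (B : {set M}) : {set G} := [set g | [forall m in B, I g m]].

Definition is_concept (p : {set G} * {set M}) : bool :=
  (intent p.1 == p.2) && (extent p.2 == p.1).

Definition concept := {p : {set G} * {set M} | is_concept p}.
Definition concept_le : rel concept := fun c d => (val c).1 \subset (val d).1.

Definition attr_concept_pair (m : M) : {set G} * {set M} :=
  (extent [set m], intent (extent [set m])).

Definition mirr_attr (m : M) : bool :=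
  [exists c : concept, (val c == attr_concept_pair m) && meet_irr concept_le c].

Definition attr_ge (m n : M) : bool := extent [set n] \subset extent [set m].

(* Birkhoff completion: objects G + copies of the meet-irreducible attributes *)
Definition BC_obj := (G + {m : M | mirr_attr m})%type.
Definition BC_inc (o : BC_obj) (n : M) : bool :=
  match o with
  | inl g => I g n
  | inr m => ~~ attr_ge (val m) n
  end.
End FCA.

(* Main.v *)
Require Import Defs.
From mathcomp Require Import all_boot.
Set Implicit Arguments. Unset Strict Implicit. Unset Printing Implicit Defensive.

Section Galois.
Variables (G M : finType) (I : G -> M -> bool).

Lemma extentP (B : {set M}) g : reflect (forall m, m \in B -> I g m) (g \in extent I B).
Proof. rewrite inE; exact: (iffP forall_inP). Qed.
Lemma intentP (A : {set G}) m : reflect (forall g, g \in A -> I g m) (m \in intent I A).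
Proof. rewrite inE; exact: (iffP forall_inP). Qed.

Lemma extentS (B1 B2 : {set M}) : B1 \subset B2 -> extent I B2 \subset extent I B1.
Proof.
move=> s; apply/subsetP => g /extentP H; apply/extentP => m /(subsetP s); exact: H.
Qed.
Lemma intentS (A1 A2 : {set G}) : A1 \subset A2 -> intent I A2 \subset intent I A1.
Proof.
move=> s; apply/subsetP => m /intentP H; apply/intentP => g /(subsetP s); exact: H.
Qed.
Lemma ext_int (A : {set G}) : A \subset extent I (intent I A).
Proof. apply/subsetP => g gA; apply/extentP => m /intentP; exact. Qed.
Lemma int_ext (B : {set M}) : B \subset intent I (extent I B).
Proof. apply/subsetP => m mB; apply/intentP => g /extentP; exact. Qed.
Lemma extK (B : {set M}) : extent I (intent I (extent I B)) = extent I B.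
Proof. by apply/eqP; rewrite eqEsubset (extentS (int_ext B)) ext_int. Qed.
Lemma intK (A : {set G}) : intent I (extent I (intent I A)) = intent I A.
Proof. by apply/eqP; rewrite eqEsubset (intentS (ext_int A)) int_ext. Qed.

Lemma conc_int (c : concept I) : intent I (val c).1 = (val c).2.
Proof. by case: c => [[A B]] /= /andP[/eqP e _]. Qed.
Lemma conc_ext (c : concept I) : extent I (val c).2 = (val c).1.
Proof. by case: c => [[A B]] /= /andP[_ /eqP e]. Qed.
Lemma conc_inj (c d : concept I) : (val c).1 = (val d).1 -> c = d.
Proof.
move=> e; apply: val_inj; move: e.
case: c => [[A B] /andP[/eqP /= eB _]]; case: d => [[A' B'] /andP[/eqP /= eB' _]] /= eA.
by rewrite -eB -eB' eA.
Qed.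

Lemma cB_proof (B : {set M}) : is_concept I (extent I B, intent I (extent I B)).
Proof. by rewrite /is_concept /= extK !eqxx. Qed.
Definition cB (B : {set M}) : concept I := exist (is_concept I) _ (cB_proof B).
Lemma cA_proof (A : {set G}) : is_concept I (extent I (intent I A), intent I A).
Proof. by rewrite /is_concept /= intK !eqxx. Qed.
Definition cA (A : {set G}) : concept I := exist (is_concept I) _ (cA_proof A).

Lemma gen_le (A : {set G}) (c : concept I) :
  A \subset (val c).1 -> extent I (intent I A) \subset (val c).1.
Proof.
move=> s; rewrite -conc_ext -conc_int; exact: extentS (intentS s).
Qed.

Notation le := (@concept_le G M I).

Lemma K2 (d : concept I) g : g \notin (val d).1 ->
  exists c : concept I, [/\ meet_irr le c, (val d).1 \subset (val c).1 &
                            g \notin (val c).1].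
Proof.
move=> gd.
pose P := fun c : concept I => ((val d).1 \subset (val c).1) && (g \notin (val c).1).
have Pd : P d by rewrite /P subxx gd.
case: (@arg_maxnP _ d P (fun c : concept I => #|(val c).1|) Pd) => c /andP[dc gc] cmax.
exists c; split => //.
apply/andP; split.
  apply/existsP; exists (cB set0); apply/negP => /subsetP H.
  by move: gc; rewrite H //=; apply/extentP => m; rewrite inE.
apply/forallP => y; apply/forallP => z; apply/implyP => /and3P[cy cz /forallP mw].
apply/negPn/negP; rewrite negb_or => /andP[ny nz].
have up : forall y : concept I, le c y -> c != y -> g \in (val y).1.
  move=> u cu nu; apply/negPn/negP => gu.
  have Pu : P u by rewrite /P gu (subset_trans dc cu).
  have := cmax u Pu => /=; rewrite leqNgt proper_card //.
  rewrite properEneq; move: cu; rewrite /concept_le => ->; rewrite andbT; apply: contra nu => /eqP e.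
  by apply/eqP; apply: conc_inj.
have gy := up y cy ny; have gz := up z cz nz.
have := mw (cA [set g]); rewrite /concept_le /=.
rewrite (gen_le (c:=y)) ?sub1set // (gen_le (c:=z)) ?sub1set //= => H.
move: gc; rewrite (subsetP H) //.
by apply: (subsetP (ext_int _)); rewrite inE.
Qed.

Lemma K1 (c : concept I) : meet_irr le c ->
  exists m, (val c).1 = extent I [set m].
Proof.
case/andP => /existsP[y0 ny0] /forallP mi.
pose P := fun S : {set M} => (S \subset (val c).2) && (extent I S == (val c).1).
have Pc : P (val c).2 by rewrite /P subxx conc_ext eqxx.
case: (@arg_minnP _ (val c).2 P (fun S : {set M} => #|S|) Pc) => S /andP[Sc /eqP eS] Smin.
have [m mS] : exists m, m \in S.
  apply/set0Pn/negP => /eqP S0; move: ny0; rewrite /concept_le -eS S0.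
  by apply/negP/negPn/subsetP => g _; apply/extentP => m; rewrite inE.
pose S1 := S :\ m.
have := mi (cB S1); move/forallP/(_ (cB [set m])) => /implyP H.
have : is_meet le c (cB S1) (cB [set m]).
  rewrite /is_meet /concept_le /= -eS !extentS ?subsetDl ?sub1set //=.
  apply/forallP => w; apply/implyP => /andP[w1 w2].
  apply/subsetP => g gw; apply/extentP => m' m'S.
  case: (eqVneq m' m) => [->|ne].
    by move/subsetP: w2 => /(_ g gw)/extentP; apply; rewrite inE.
  by move/subsetP: w1 => /(_ g gw)/extentP; apply; rewrite !inE ne.
move/H => /orP[/eqP e | /eqP e].
  have PS1 : P S1.
    by rewrite /P (subset_trans (subsetDl _ _) Sc) e eqxx.
  have := Smin S1 PS1; rewrite (cardsD1 m S) mS.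
  by rewrite add1n ltnn.
by exists m; rewrite e.
Qed.

End Galois.

Section Main.
Variables (G M : finType) (I : G -> M -> bool).
Notation L := (concept I).
Notation le := (@concept_le G M I).
Notation K' := (@BC_inc G M I).
Notation CB := (concept K').

Definition fset (C : CB) : {set L} :=
  [set c : L | meet_irr le c &&
     [exists n in (val C).2, extent I [set n] \subset (val c).1]].

Lemma f_filter C : is_mirr_filter le (fset C).
Proof.
apply/andP; split.
  by apply/subsetP => c; rewrite !inE => /andP[].
apply/forallP => x; apply/forallP => y; apply/implyP => /and3P[].
rewrite !inE => /andP[_ /existsP[n /andP[nC nx]]] my xy.
rewrite my /=; apply/existsP; exists n; rewrite nC /=.
exact: subset_trans nx xy.
Qed.

Definition f (C : CB) : BC_lattice le := exist _ (fset C) (f_filter C).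

Lemma f_mono (C1 C2 : CB) : concept_le C1 C2 = BC_le (f C1) (f C2).
Proof.
rewrite /BC_le /f /= /concept_le.
apply/idP/idP => [s|s].
  have s2 : (val C2).2 \subset (val C1).2.
    by rewrite -!conc_int; apply: intentS.
  apply/subsetP => c; rewrite !inE => /andP[-> /existsP[n /andP[nC nc]]] /=.
  by apply/existsP; exists n; rewrite (subsetP s2).
rewrite -(conc_ext C2); apply/subsetP => o oA; apply/extentP => n nB.
case: o oA => [g|[m mm]] oA /=.
- apply/negPn/negP => gn.
  have [c [mc nc gc]] := @K2 _ _ I (cB I [set n]) g
    (introN (extentP _ _ _) (fun H => negP gn (H n (set11 n)))).
  have : c \in fset C2.
    by rewrite inE mc; apply/existsP; exists n; rewrite nB.
  move/(subsetP s); rewrite inE => /andP[_ /existsP[n1 /andP[n1B n1c]]].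
  apply: (negP gc); apply: (subsetP n1c); apply/extentP => m; rewrite inE => /eqP ->.
  by move: oA; rewrite -(conc_ext C1) => /extentP; apply.
- apply/negP => mn.
  case/existsP: (mm) => c /andP[/eqP vc mc].
  have : c \in fset C2.
    by rewrite inE mc; apply/existsP; exists n; rewrite nB vc.
  move/(subsetP s); rewrite inE => /andP[_ /existsP[n1 /andP[n1B n1c]]].
  move: oA; rewrite -(conc_ext C1) => /extentP /(_ n1 n1B) /=.
  by rewrite /attr_ge; move: n1c; rewrite vc /= => ->.
Qed.

Lemma f_surj (F : BC_lattice le) : exists C, f C == F.
Proof.
have /andP[Fs /forallP Fup] := valP F.
pose B0 := [set n | [exists c in val F, (val c).1 == extent I [set n]]].
exists (cB K' B0); apply/eqP; apply: val_inj => /=.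
apply/setP => c; rewrite inE.
apply/idP/idP.
- case/andP => mc /existsP[n /andP[nB nc]].
  apply/negPn/negP => cF.
  have [m em] := K1 mc.
  have mm : mirr_attr I m.
    apply/existsP; exists c; rewrite mc andbT /attr_concept_pair -em conc_int.
    by case: (val c) => ? ?.
  have oA : (inr (exist _ m mm) : BC_obj I) \in extent K' B0.
    apply/extentP => n'; rewrite inE => /existsP[c' /andP[c'F /eqP e']] /=.
    apply/negP => /= sub; apply: (negP cF).
    have := Fup c'; move/forallP/(_ c)/implyP; apply.
    by rewrite c'F mc /concept_le e' em.
  move: nB => /intentP /(_ _ oA) /=.
  by rewrite /attr_ge -em nc.
- move=> cF; have mc : meet_irr le c by move/subsetP: Fs => /(_ c cF); rewrite inE.
  rewrite mc /=.
  have [m em] := K1 mc.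
  apply/existsP; exists m; rewrite em subxx andbT.
  apply: (subsetP (int_ext _ _)); rewrite inE.
  by apply/existsP; exists c; rewrite cF em eqxx.
Qed.

End Main.

Theorem mainTheorem5 (G M : finType) (I : G -> M -> bool) :
  order_iso (@concept_le (BC_obj I) M (@BC_inc G M I))
            (@BC_le (concept I) (@concept_le G M I)).
Proof.
have finj : injective (@f G M I).
  move=> C1 C2 e; apply: conc_inj; apply/eqP; rewrite eqEsubset.
  have := f_mono C1 C2; have := f_mono C2 C1.
  by rewrite e /BC_le subxx /concept_le => -> ->.
exists (@f G M I); split; last exact: f_mono.
pose g := fun F : BC_lattice (@concept_le G M I) => xchoose (f_surj F).
have fg : cancel g (@f G M I) by move=> F; exact: eqP (xchooseP (f_surj F)).
exists g => // C; apply: finj; exact: fg.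
Qed.
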